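(* Let $\lambda=[8,8,8,8,4,4,4,4]$ and $\mu=[16,\underbrace{2,\ldots,2}_{16},\underbrace{1,\ldots,1}_{16}]$. Then $\|\lambda\|_p\le\|\mu\|_p$ for all $p\in[1,\infty]$ (so $\lambda$ bulk-embeds into $\mu$), with equality at $p=\ln(1+\sqrt5)/\ln 2>1$; consequently $\lambda$ does not stably embed into $\mu$. Moreover $\lambda\not\preccurlyeq_S\mu$.
   Context: Partitions are finite nonincreasing sequences of positive integers. For $p\in[1,\infty)$, $\|\lambda\|_p=(\sum_i\lambda_i^p)^{1/p}$ and $\|\lambda\|_\infty=\max_i\lambda_i$. The product $\lambda\times\nu$ is the partition of all products $\lambda_i\nu_j$, reordered nonincreasingly. $\lambda=[\lambda_1,\ldots,\lambda_m]$ embeds into $\mu=[\mu_1,\ldots,\mu_n]$ if there is a map $\varphi:\{1,\ldots,m\}\to\{1,\ldots,n\}$ with $\sum_{i\in\varphi^{-1}(j)}\lambda_i\le\mu_j$ for all $j$; $\lambda$ stably embeds into $\mu$ if $\lambda\times\nu$ embeds into $\mu\times\nu$ for some partition $\nu$. $\lambda$ bulk-embeds into $\mu$ if for every rational $\epsilon>0$ there is $N$ with $\lambda^{\times N}$ embedding into $\mu^{\times N(1+\epsilon)}$ (equivalently $\|\lambda\|_p\le\|\mu\|_p$ for all $p\in[1,\infty]$). $\lambda\preccurlyeq_S\mu$ means: for every $x\in\mathbb N$, $\sum_{\lambda_i\ge x}\lambda_i\le\sum_{\mu_j\ge x}\mu_j$. *)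

(* Defs.v *)
From HB Require Import structures.
From mathcomp Require Import all_boot all_order all_algebra.
From mathcomp Require Import all_classical all_reals.
From mathcomp Require Import exp.
Set Implicit Arguments. Unset Strict Implicit. Unset Printing Implicit Defensive.
Import Order.TTheory GRing.Theory Num.Theory.

Definition is_partition (s : seq nat) : bool :=
  sorted geq s && all (fun x => 0 < x)%N s.

Definition embeds (lam mu : seq nat) : Prop :=
  exists phi : 'I_(size lam) -> 'I_(size mu),
    forall j : 'I_(size mu),
      (\sum_(i : 'I_(size lam) | phi i == j) nth 0 lam i <= nth 0 mu j)%N.

Definition part_prod (lam nu : seq nat) : seq nat :=
  sort geq [seq (x * y)%N | x <- lam, y <- nu].

Definition stably_embeds (lam mu : seq nat) : Prop :=
  exists nu : seq nat, [/\ is_partition nu, (0 < size nu)%N &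
                          embeds (part_prod lam nu) (part_prod mu nu)].

Definition S_le (lam mu : seq nat) : Prop :=
  forall x : nat,
    (\sum_(y <- lam | (x <= y)%N) y <= \sum_(y <- mu | (x <= y)%N) y)%N.

Local Open Scope ring_scope.

Definition pnorm (R : realType) (p : R) (s : seq nat) : R :=
  (\sum_(x <- s) (x%:R : R) `^ p) `^ (p^-1).

Definition infnorm (R : realType) (s : seq nat) : R :=
  ((\max_(x <- s) x)%N)%:R.

Definition lam7 : seq nat := [:: 8; 8; 8; 8; 4; 4; 4; 4]%N.
Definition mu7 : seq nat := (16%N :: nseq 16 2%N) ++ nseq 16 1%N.

(* Main.v *)
Require Import Defs.
From HB Require Import structures.
From mathcomp Require Import all_boot all_order all_algebra.
From mathcomp Require Import all_classical all_reals.
From mathcomp Require Import exp.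
From mathcomp Require Import ring lra.
Import Order.TTheory GRing.Theory Num.Theory.
Local Open Scope ring_scope.

Section S.
Variable R : realType.

Definition sumpow (p : R) (s : seq nat) : R := \sum_(x <- s) (x%:R : R) `^ p.

Lemma powS (x p : R) : 0 <= x -> 1 <= p -> x `^ p = x * x `^ (p - 1).
Proof.
move=> x0 p1; have [->|xn0] := eqVneq x 0.
  by rewrite mul0r powR0 // gt_eqF // (lt_le_trans _ p1).
have -> : x `^ p = x `^ ((p - 1) + 1) by rewrite subrK.
rewrite powRD; last by rewrite xn0 implybT.
by rewrite powRr1 // mulrC.
Qed.

Lemma bin_le (p : R) (I : finType) (P : pred I) (x : I -> nat) (y : nat) :
  1 <= p -> (\sum_(i | P i) x i <= y)%N ->
  \sum_(i | P i) ((x i)%:R : R) `^ p <= (y%:R : R) `^ p.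
Proof.
move=> p1 Hs.
have xle i : P i -> (x i <= y)%N.
  move=> Pi; apply: leq_trans Hs; by rewrite (bigD1 i) //= leq_addr.
apply: (@le_trans _ _ (\sum_(i | P i) (x i)%:R * (y%:R : R) `^ (p - 1))).
  apply: ler_sum => i Pi; rewrite powS ?ler0n //.
  apply: ler_wpM2l; first exact: ler0n.
  apply: ge0_ler_powR; rewrite ?nnegrE ?ler0n ?subr_ge0 //.
  by rewrite ler_nat xle.
rewrite -big_distrl /= -natr_sum [X in _ <= X]powS ?ler0n //.
by apply: ler_wpM2r; [exact: powR_ge0 | rewrite ler_nat].
Qed.

Lemma embed_lt (p : R) a b : 1 <= p -> embeds a b ->
  all (fun x => 0 < x)%N b -> (size a < size b)%N -> sumpow p a < sumpow p b.
Proof.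
move=> p1 [phi H] bpos sab.
have [j0 Hj0] : exists j0, j0 \notin [set phi i | i in 'I_(size a)].
  case: (boolP ([set: 'I_(size b)] \subset [set phi i | i in 'I_(size a)])) => [sub|].
    have := subset_leq_card sub; rewrite cardsT card_ord.
    have := leq_imset_card phi 'I_(size a); rewrite card_ord => h1 h2.
    by have := leq_trans h2 h1; rewrite leqNgt sab.
  by move/subsetPn => [j0 _ ?]; exists j0.
rewrite /sumpow [X in X < _](big_nth 0%N) [X in _ < X](big_nth 0%N) !big_mkord.
rewrite (partition_big phi xpredT) //.
rewrite [X in _ < X](bigD1 j0) //= (bigD1 j0) //=.
apply: ltr_leD.
  rewrite big1; last first.
    move=> i /eqP ei; move: Hj0; by rewrite -ei imset_f.
  apply: powR_gt0; rewrite ltr0n.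
  by move/allP: bpos; apply; rewrite mem_nth.
apply: ler_sum => j _.
by apply: bin_le => //; exact: H.
Qed.

Lemma sum_prod (p : R) a n : sumpow p (part_prod a n) = sumpow p a * sumpow p n.
Proof.
rewrite /sumpow /part_prod (perm_big _ (permEl (perm_sort _ _))).
rewrite big_allpairs_dep /= big_distrl /=.
apply: eq_bigr => x _; rewrite big_distrr /=.
by apply: eq_bigr => y _; rewrite natrM powRM ?ler0n.
Qed.

Lemma pow2n (p : R) n : (((2 ^ n)%N)%:R : R) `^ p = (2 `^ p) ^+ n.
Proof.
elim: n => [|n IH]; first by rewrite expn0 expr0 powR1.
by rewrite expnS natrM powRM ?ler0n // IH exprS.
Qed.

Lemma sum_lam p : sumpow p lam7 = 4 * (2 `^ p) ^+ 3 + 4 * (2 `^ p) ^+ 2.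
Proof.
rewrite /sumpow /lam7 !big_cons big_nil.
rewrite -[8%N]/(2^3)%N -[4%N]/(2^2)%N !pow2n. ring.
Qed.

Lemma sum_mu p : sumpow p mu7 = (2 `^ p) ^+ 4 + 16 * (2 `^ p) + 16.
Proof.
rewrite /sumpow /mu7 /= !big_cons big_nil.
rewrite -[16%N]/(2^4)%N -[2%N]/(2^1)%N -[1%N]/(2^0)%N !pow2n. ring.
Qed.
End S.
Arguments sumpow {R}.
Arguments embed_lt {R}.
Arguments sum_prod {R}.
Arguments sum_lam {R}.
Arguments sum_mu {R}.

Lemma diff_sq (R : realType) (p : R) :
  sumpow p mu7 - sumpow p lam7 = ((2 `^ p) ^+ 2 - 2 * 2 `^ p - 4) ^+ 2.
Proof. rewrite sum_lam sum_mu; ring. Qed.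

Theorem mainTheorem7 (R : realType) :
  is_partition lam7 /\ is_partition mu7 /\
      (forall p : R, 1 <= p -> pnorm p lam7 <= pnorm p mu7) /\
      infnorm R lam7 <= infnorm R mu7 /\
      (let p0 : R := ln (1 + Num.sqrt 5) / ln 2 in
         1 < p0 /\ pnorm p0 lam7 = pnorm p0 mu7) /\
      ~ stably_embeds lam7 mu7 /\
      ~ S_le lam7 mu7.
Proof.
have ln2 : 0 < ln (2 : R) by apply: ln_gt0; lra.
have s1 : 1 < Num.sqrt (5 : R).
  by rewrite -[X in X < _]sqrtr1 ltr_sqrt; lra.
have p0gt1 : 1 < ln (1 + Num.sqrt 5) / ln (2:R).
  by rewrite ltr_pdivlMr // mul1r ltr_ln ?posrE; lra.
have t0 : 2 `^ (ln (1 + Num.sqrt 5) / ln (2:R)) = 1 + Num.sqrt 5.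
  rewrite /powR (negbTE (_ : (2:R) != 0)) ?pnatr_eq0 // divfK ?gt_eqF //.
  by rewrite lnK // posrE; lra.
have eq0 : sumpow (ln (1 + Num.sqrt 5) / ln (2:R)) lam7 =
           sumpow (ln (1 + Num.sqrt 5) / ln (2:R)) mu7.
  apply/eqP; rewrite eq_sym -subr_eq0 diff_sq t0.
  have -> : (1 + Num.sqrt (5:R)) ^+ 2 - 2 * (1 + Num.sqrt 5) - 4 =
            Num.sqrt 5 ^+ 2 - 5 by ring.
  by rewrite sqr_sqrtr ?ler0n // subrr expr0n.
split; first by [].
split; first by [].
split.
  move=> p p1; rewrite /pnorm; apply: ge0_ler_powR.
  - by rewrite invr_ge0; lra.
  - by rewrite nnegrE; apply: sumr_ge0 => *; exact: powR_ge0.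
  - by rewrite nnegrE; apply: sumr_ge0 => *; exact: powR_ge0.
  change (sumpow p lam7 <= sumpow p mu7).
  by rewrite -subr_ge0 diff_sq sqr_ge0.
split; first by rewrite /infnorm ler_nat unlock.
split.
  move=> /=; split => //.
  by rewrite /pnorm; change (sumpow (ln (1 + Num.sqrt 5) / ln (2:R)) lam7 `^ (ln (1 + Num.sqrt 5) / ln (2:R))^-1 =
     sumpow (ln (1 + Num.sqrt 5) / ln (2:R)) mu7 `^ (ln (1 + Num.sqrt 5) / ln (2:R))^-1); rewrite eq0.
split; last by move/(_ 3%N); rewrite unlock.
move=> [nu [nup nu0 Hemb]].
have H1 : all (fun x => 0 < x)%N (part_prod mu7 nu).
  apply/allP => z; rewrite mem_sort => /allpairsP [[x y] [xin yin ->]] /=.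
  rewrite muln_gt0; apply/andP; split.
    by have /allP := (erefl true : all (fun x => 0 < x)%N mu7); apply.
  by case/andP: nup => _ /allP; apply.
have H2 : (size (part_prod lam7 nu) < size (part_prod mu7 nu))%N.
  by rewrite !size_sort !size_allpairs /= ltn_pmul2r.
have := embed_lt _ _ _ (ltW p0gt1) Hemb H1 H2.
by rewrite !sum_prod eq0 ltxx.
Qed.
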